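(* Under the standing assumptions, $\sum_{n\eta_1\le S\le n\eta_2}\Phi(S)=o(1)$ as $n\to\infty$, the sum being over integers $S$.
   Context: Parameters: integer $k\ge2$, constants $\alpha>0$, $r>0$, $0<p<1$; $d=n^{\alpha}$ (treated as an integer), $m=n\ln d$, $\tau=\frac1{1-p}$, $r_{cr}=\frac1{\ln\tau}$. Standing assumptions: $(2k-1)\alpha>1$, $k\alpha\le1$, $k\ge\frac{\tau\ln\tau}{\tau-1}$, and $r<r_{cr}$. Notation: $f(s)=1+\frac{p}{1-p}\cdot\frac{s^k-d^{-k}}{1-d^{-k}}$ for $s\in[0,1]$; $B(S)=\binom{n}{S}\left(\frac1d\right)^{S}\left(1-\frac1d\right)^{n-S}$; $W(S)=f(S/n)^{rm}$; $\Phi(S)=B(S)W(S)$. Let $\lambda>0$ be a fixed constant and $\eta_1=\frac1d+\frac{\lambda}{n^{1-(k-1)\alpha}\ln d}$. Let $\alpha_0=\frac{(2k-1)\alpha-1}{2(k-1)}$, and let $\eta_2,\eta_3,\mu$ be constants with $0<\eta_2<\eta_3<1$, $\alpha_0/\alpha-\mu\eta_2^{k-1}>0$, $\mu>\frac{kpr}{1-p}$, and $r\ln(1-p)+\eta_3>0$. *)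

(* Defs.v *)
From Stdlib Require Import Reals.
Open Scope R_scope.

(* d = n^alpha (the real value; "treated as an integer" = rounding ignored) *)
Definition dd (alpha : R) (n : nat) : R := Rpower (INR n) alpha.
Definition mm (alpha : R) (n : nat) : R := INR n * ln (dd alpha n).
Definition tau (p : R) : R := 1 / (1 - p).
Definition r_cr (p : R) : R := 1 / ln (tau p).

Definition ff (p : R) (k : nat) (d s : R) : R :=
  1 + p / (1 - p) * ((s ^ k - (/ d) ^ k) / (1 - (/ d) ^ k)).

Definition BB (n : nat) (d : R) (S : nat) : R :=
  Binomial.C n S * (/ d) ^ S * (1 - / d) ^ (n - S).

Definition WW (alpha r p : R) (k n S : nat) : R :=
  Rpower (ff p k (dd alpha n) (INR S / INR n)) (r * mm alpha n).

Definition Phi (alpha r p : R) (k n S : nat) : R :=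
  BB n (dd alpha n) S * WW alpha r p k n S.

Definition eta1 (alpha lam : R) (k n : nat) : R :=
  / dd alpha n + lam / (Rpower (INR n) (1 - (INR k - 1) * alpha) * ln (dd alpha n)).

Definition alpha0 (alpha : R) (k : nat) : R :=
  ((2 * INR k - 1) * alpha - 1) / (2 * (INR k - 1)).

(* sum over integers S with n*eta1 <= S <= n*eta2 of Phi(S);
   since eta2 < 1, such S lie in 0..n *)
Definition sum_Phi (alpha r p lam eta2 : R) (k n : nat) : R :=
  sum_f_R0 (fun S =>
    if Rle_dec (INR n * eta1 alpha lam k n) (INR S) then
      if Rle_dec (INR S) (INR n * eta2) then Phi alpha r p k n S else 0
    else 0) n.

(* Main.v *)
Require Import Defs.
From Stdlib Require Import Reals Lra Psatz.
From Coquelicot Require Import Coquelicot.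
Open Scope R_scope.
Lemma sum_le_term (g : nat -> R) (n i : nat) :
  (forall j, 0 <= g j) -> (i <= n)%nat -> g i <= sum_f_R0 g n.
Proof.
  intros Hg Hi. induction n as [|n IH].
  - assert (i = 0%nat) by lia. subst. simpl. lra.
  - simpl. destruct (Nat.eq_dec i (S n)) as [->|Hne].
    + assert (0 <= sum_f_R0 g n).
      { clear IH Hi. induction n; simpl; [apply Hg|specialize (Hg (S n)); lra]. }
      lra.
    + specialize (IH ltac:(lia)). specialize (Hg (S n)). lra.
Qed.

Lemma sum_bound (g : nat -> R) (n : nat) (b : R) :
  (forall j, (j <= n)%nat -> 0 <= g j <= b) ->
  0 <= sum_f_R0 g n <= INR (S n) * b.
Proof.
  induction n as [|n IH]; intros H.
  - simpl. specialize (H 0%nat ltac:(lia)). lra.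
  - simpl sum_f_R0. rewrite S_INR.
    destruct (IH (fun j hj => H j ltac:(lia))) as [h1 h2].
    specialize (H (S n) ltac:(lia)). nra.
Qed.

Lemma C_pos n S : 0 <= Binomial.C n S.
Proof.
  unfold Binomial.C. unfold Rdiv. apply Rmult_le_pos. apply pos_INR. apply Rlt_le, Rinv_0_lt_compat.
  apply Rmult_lt_0_compat; apply INR_fact_lt_0.
Qed.

Lemma binom_term_le1 n S (s : R) : (S <= n)%nat -> 0 <= s <= 1 ->
  Binomial.C n S * s ^ S * (1 - s) ^ (n - S) <= 1.
Proof.
  intros HS Hs.
  replace 1 with ((s + (1 - s)) ^ n) at 2 by (replace (s + (1-s)) with 1 by ring; apply pow1).
  rewrite binomial.
  apply (sum_le_term (fun i => Binomial.C n i * s ^ i * (1 - s) ^ (n - i))); auto.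
  intros j. apply Rmult_le_pos; [apply Rmult_le_pos|]; [apply C_pos| apply pow_le; lra| apply pow_le; lra].
Qed.

Lemma pow_diff (q s : R) (k : nat) : 0 <= q <= s ->
  s ^ k - q ^ k <= INR k * s ^ (k - 1) * (s - q).
Proof.
  intros Hq. induction k as [|k IH].
  - simpl. lra.
  - replace (S k - 1)%nat with k by lia. rewrite S_INR.
    destruct k as [|k].
    + simpl. lra.
    + replace (S k - 1)%nat with k in IH by lia.
      replace (s ^ S (S k)) with (s * s ^ S k) by (simpl; ring).
      replace (q ^ S (S k)) with (q * q ^ S k) by (simpl; ring).
      assert (q ^ S k <= s ^ S k) by (apply pow_incr; lra).
      assert (0 <= q ^ S k) by (apply pow_le; lra).
      set (X := s ^ S k) in *. set (Y := q ^ S k) in *.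
      assert (Hs : s * (s ^ k) = X) by (unfold X; simpl; ring).
      assert (h1 : s * (X - Y) <= s * (INR (S k) * s ^ k * (s - q))).
      { apply Rmult_le_compat_l; lra. }
      assert (h2 : Y * (s - q) <= X * (s - q)).
      { apply Rmult_le_compat_r; lra. }
      replace (s * (INR (S k) * s ^ k * (s - q))) with (INR (S k) * X * (s - q)) in h1
        by (rewrite <- Hs; ring).
      nra.
Qed.

Lemma pow_exp a m : exp a ^ m = exp (INR m * a).
Proof.
  induction m as [|m IH]. simpl. rewrite Rmult_0_l, exp_0. reflexivity.
  rewrite S_INR. simpl. rewrite IH, <- exp_plus. f_equal. ring.
Qed.
Lemma B_bound (n S : nat) (q : R) : (S <= n)%nat -> 0 < INR n -> 0 < q ->
  q < INR S / INR n -> INR S / INR n < 1 ->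
  Binomial.C n S * q ^ S * (1 - q) ^ (n - S) <=
  exp (INR S * ln (INR n * q / INR S) + (INR S - INR n * q)).
Proof.
  intros HSn Hn Hq Hqs Hs1. set (s := INR S / INR n) in *.
  assert (Hs0 : 0 < s) by lra.
  assert (HS : 0 < INR S) by (unfold s in Hs0; apply Rmult_lt_reg_r with (/ INR n);
            [apply Rinv_0_lt_compat; lra| unfold Rdiv in Hs0; lra]).
  assert (Hq1 : q = (q / s) * s) by (field; lra).
  assert (Hq2 : 1 - q = ((1 - q) / (1 - s)) * (1 - s)) by (field; lra).
  rewrite Hq1 at 1. rewrite Hq2 at 1. rewrite !Rpow_mult_distr.
  assert (H1 := binom_term_le1 n S s HSn ltac:(lra)).
  assert (Ha : (q / s) ^ S = exp (INR S * ln (INR n * q / INR S))).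
  { rewrite <- Rpower_pow by (apply Rdiv_lt_0_compat; lra). unfold Rpower.
    f_equal. f_equal. f_equal. unfold s. field. lra. }
  assert (Hb : ((1 - q) / (1 - s)) ^ (n - S) <= exp (INR S - INR n * q)).
  { apply Rle_trans with (exp ((s - q) / (1 - s)) ^ (n - S)).
    - apply pow_incr. split.
      + apply Rlt_le, Rdiv_lt_0_compat; lra.
      + replace ((1 - q) / (1 - s)) with (1 + (s - q) / (1 - s)) by (field; lra).
        apply exp_ineq1_le.
    - rewrite pow_exp, minus_INR by exact HSn. right. f_equal.
      unfold s. field. split; [lra|]. unfold s in Hs1.
      intro h. assert (INR n - INR S = 0) by lra. apply (Rmult_lt_compat_r (INR n)) in Hs1; [|lra].
      unfold Rdiv in Hs1. rewrite Rmult_assoc, Rinv_l in Hs1; lra. }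
  rewrite exp_plus, <- Ha.
  assert (0 <= (q / s) ^ S) by (apply pow_le, Rlt_le, Rdiv_lt_0_compat; lra).
  assert (0 <= Binomial.C n S * s ^ S * (1 - s) ^ (n - S)).
  { apply Rmult_le_pos; [apply Rmult_le_pos|]; [apply C_pos| apply pow_le; lra| apply pow_le; lra]. }
  assert (0 <= ((1 - q) / (1 - s)) ^ (n - S)) by (apply pow_le, Rlt_le, Rdiv_lt_0_compat; lra).
  set (A := (q / s) ^ S) in *. set (B := ((1 - q) / (1 - s)) ^ (n - S)) in *.
  set (Z := Binomial.C n S * s ^ S * (1 - s) ^ (n - S)) in *.
  replace (Binomial.C n S * (A * s ^ S) * (B * (1 - s) ^ (n - S))) with (Z * (A * B)) by (unfold Z; ring).
  assert (0 <= A * B) by (apply Rmult_le_pos; lra).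
  apply Rle_trans with (1 * (A * B)). apply Rmult_le_compat_r; lra.
  rewrite Rmult_1_l. apply Rmult_le_compat_l; lra.
Qed.

Lemma exp_le_mono x y : x <= y -> exp x <= exp y.
Proof. intros [h|h]. left; apply exp_increasing; auto. subst; lra. Qed.
Lemma exp_le_inv x y : exp x <= exp y -> x <= y.
Proof. intros [h|h]. left; apply exp_lt_inv; auto. right. apply (f_equal ln) in h. rewrite !ln_exp in h. exact h. Qed.
Lemma ln_le_mono x y : 0 < x -> x <= y -> ln x <= ln y.
Proof. intros h [h'|h']. left; apply ln_increasing; auto. subst; lra. Qed.
Lemma ln_le_xm1 x : 0 < x -> ln x <= x - 1.
Proof. intros h. rewrite <- (ln_exp (x - 1)). apply ln_le_mono; auto. pose proof (exp_ineq1_le (x-1)). lra. Qed.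

Lemma arithA (t t0 mu0 a b : R) : 0 < t0 -> t0 <= t -> t0 <= mu0 ->
  2 * a <= t0 / (3 * mu0) -> 2 * b <= t0 ^ 2 / (6 * mu0) ->
  - (t ^ 2 / (2 * mu0 + t)) + a * t <= - (2 * b).
Proof.
  intros h0 h1 h2 ha hb.
  assert (Hu : t0 / (3 * mu0) <= t / (2 * mu0 + t)).
  { apply Rmult_le_reg_r with (3 * mu0 * (2 * mu0 + t)). nra.
    replace (t0 / (3 * mu0) * (3 * mu0 * (2 * mu0 + t))) with (t0 * (2*mu0+t)) by (field; lra).
    replace (t / (2 * mu0 + t) * (3 * mu0 * (2 * mu0 + t))) with (3*mu0*t) by (field; lra).
    nra. }
  replace (t ^ 2 / (2 * mu0 + t)) with (t * (t / (2 * mu0 + t))) by (field; lra).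
  assert (a <= t0 / (6 * mu0)).
  { replace (t0 / (6 * mu0)) with (t0 / (3 * mu0) / 2) by (field; lra). lra. }
  assert (t * (t0 / (6*mu0)) <= t * (t / (2 * mu0 + t)) - a * t).
  { replace (t * (t / (2 * mu0 + t)) - a * t) with (t * (t / (2 * mu0 + t) - a)) by ring.
    apply Rmult_le_compat_l; [lra|].
    replace (t0 / (6 * mu0)) with (t0 / (3 * mu0) - t0 / (6 * mu0)) by (field; lra). lra. }
  assert (t0 * (t0 / (6*mu0)) <= t * (t0 / (6*mu0))).
  { apply Rmult_le_compat_r; [|lra]. apply Rlt_le, Rdiv_lt_0_compat; lra. }
  replace (t0 ^ 2 / (6 * mu0)) with (t0 * (t0 / (6*mu0))) in hb by (field; lra).
  lra.
Qed.
Lemma ln_lb (x : R) : 0 <= x -> 2 * x / (2 + x) <= ln (1 + x).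
Proof.
  intros Hx. destruct (Req_dec x 0) as [->|Hx0].
  { replace (1+0) with 1 by ring. rewrite ln_1. unfold Rdiv. nra. }
  set (f := fun y => ln (1 + y) - 2 * y / (2 + y)).
  set (f' := fun y => y^2 / ((1 + y) * (2 + y)^2)).
  assert (Hd : forall y, 0 <= y -> y <= x -> derivable_pt_lim f y (f' y)).
  { intros y Hy1 Hy2. apply is_derive_Reals. unfold f, f'.
    auto_derive. { split; [lra|split; [lra|exact I]]. }
    field. lra. }
  destruct (MVT_cor3 f f' 0 x ltac:(lra) (fun y h1 h2 => Hd y h1 h2)) as [c [Hc1 [Hc2 Hc]]].
  assert (f 0 = 0).
  { unfold f. replace (1+0) with 1 by ring. rewrite ln_1. field. }
  assert (0 <= f' c * (x - 0)).
  { unfold f'. apply Rmult_le_pos; [|lra]. apply Rdiv_le_0_compat; [nra|].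
    apply Rmult_lt_0_compat; [lra| apply pow_lt; lra]. }
  fold (f x) in Hc. rewrite H in Hc. unfold f in Hc. lra.
Qed.

Lemma pow_split_le (s e : R) (k : nat) : (1 <= k)%nat -> 0 <= s -> s <= e ->
  s ^ k <= s * e ^ (k - 1).
Proof.
  intros Hk Hs He. destruct k as [|k]; [lia|]. simpl. rewrite Nat.sub_0_r.
  apply Rmult_le_compat_l; [lra|]. apply pow_incr; lra.
Qed.

Lemma term_bound (k : nat) (alpha r p lam eta2 mu : R) (n S : nat) :
  (2 <= k)%nat -> 0 < alpha -> INR k * alpha <= 1 -> 0 < r -> 0 < p -> p < 1 ->
  0 < lam -> 0 < eta2 -> eta2 < 1 ->
  mu > INR k * p * r / (1 - p) ->
  0 < alpha0 alpha k - alpha * mu * eta2 ^ (k - 1) ->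
  0 < INR n -> (S <= n)%nat ->
  1 <= alpha * ln (INR n) -> lam <= alpha * ln (INR n) ->
  2 <= (alpha0 alpha k - alpha * mu * eta2 ^ (k - 1)) * ln (INR n) ->
  4 <= (alpha0 alpha k - alpha * mu * eta2 ^ (k - 1)) * exp ((1 - alpha) * ln (INR n)) ->
  6 * (2 * r * alpha * p * INR k / (1 - p)) * alpha * ln (INR n) ^ 2 <=
     lam * exp (((INR k - 1) * alpha - (1 - alpha) / 2) * ln (INR n)) ->
  12 * alpha ^ 2 * ln (INR n) ^ 3 <=
     (lam * exp (((INR k - 1) * alpha - (1 - alpha) / 2) * ln (INR n))) ^ 2 ->
  INR n * eta1 alpha lam k n <= INR S -> INR S <= INR n * eta2 ->
  Phi alpha r p k n S <= exp (- (2 * ln (INR n))).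
Proof.
  intros Hk Ha Hka Hr Hp Hp1 Hlam He2 He21 Hmu Hc0 Hn HSn HL1 HL2 HL3 HL4 HL5 HL6 HS1 HS2.
  set (L := ln (INR n)) in *.
  set (c0 := alpha0 alpha k - alpha * mu * eta2 ^ (k - 1)) in *.
  set (K := 2 * r * alpha * p * INR k / (1 - p)) in *.
  set (g := (INR k - 1) * alpha - (1 - alpha) / 2) in *.
  assert (HnL : INR n = exp L) by (unfold L; rewrite exp_ln; auto).
  assert (Hk2 : 2 <= INR k) by (replace 2 with (INR 2) by (simpl; ring); apply le_INR; auto).
  assert (Ha1 : alpha <= / 2).
  { apply Rmult_le_reg_l with 2; [lra|]. rewrite Rinv_r by lra. nra. }
  assert (HL0 : 0 < L) by nra.
  set (q := exp (- (alpha * L))).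
  assert (Hd : dd alpha n = exp (alpha * L)) by reflexivity.
  assert (Hq : / dd alpha n = q) by (rewrite Hd; unfold q; rewrite exp_Ropp; reflexivity).
  assert (Hq0 : 0 < q) by apply exp_pos.
  assert (Hq2 : q <= / 2).
  { unfold q. rewrite exp_Ropp. apply Rinv_le_contravar; [lra|].
    pose proof (exp_ineq1_le (alpha * L)). lra. }
  set (mu0 := INR n * q).
  set (h := exp ((1 - alpha) / 2 * L)).
  set (Eg := exp (g * L)).
  assert (Hh0 : 0 < h) by apply exp_pos.
  assert (HEg0 : 0 < Eg) by apply exp_pos.
  assert (Hmu0 : mu0 = h * h).
  { unfold mu0, h, q. rewrite HnL, <- !exp_plus. f_equal. field. }
  set (t0 := lam * (Eg * h) / (alpha * L)).
  assert (Heta1 : INR n * eta1 alpha lam k n = mu0 + t0).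
  { unfold eta1. rewrite Hq. unfold Rpower. fold L. rewrite Hd, ln_exp.
    unfold mu0, t0, Eg, h.
    assert (E : exp L = exp ((1 - (INR k - 1) * alpha) * L) * (exp (g * L) * exp ((1 - alpha) / 2 * L))).
    { rewrite <- !exp_plus. f_equal. unfold g. ring. }
    rewrite HnL, E. field. pose proof (exp_pos ((1 - (INR k - 1) * alpha) * L)). repeat split; try lra; nra. }
  assert (Ht0 : 0 < t0) by (unfold t0; apply Rdiv_lt_0_compat; [apply Rmult_lt_0_compat; [lra|apply Rmult_lt_0_compat; lra] | nra]).
  assert (Ht0mu : t0 <= mu0).
  { rewrite Hmu0. unfold t0. apply Rmult_le_reg_r with (alpha * L); [nra|].
    replace (lam * (Eg * h) / (alpha * L) * (alpha * L)) with (lam * Eg * h) by (field; nra).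
    assert (Eg <= h).
    { unfold Eg, h. apply exp_le_mono. apply Rmult_le_compat_r; [lra|]. unfold g.
      assert (INR k * alpha - alpha <= 1 - alpha) by lra. lra. }
    assert (lam * Eg <= alpha * L * h) by (apply Rmult_le_compat; lra).
    nra. }
  rewrite Heta1 in HS1.
  set (Sr := INR S) in *.
  assert (HS0 : 0 < Sr) by lra.
  set (s := Sr / INR n).
  assert (Hsq : q < s).
  { unfold s. apply Rmult_lt_reg_r with (INR n); [lra|]. unfold Rdiv. rewrite Rmult_assoc, Rinv_l by lra.
    rewrite Rmult_1_r, Rmult_comm. fold mu0. lra. }
  assert (Hs2 : s <= eta2).
  { unfold s. apply Rmult_le_reg_r with (INR n); [lra|]. unfold Rdiv. rewrite Rmult_assoc, Rinv_l by lra.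
    lra. }
  set (t := Sr - mu0).
  assert (Ht : t0 <= t) by (unfold t; lra).
  assert (Hs1 : s < 1) by lra.
  assert (HB := B_bound n S q HSn Hn Hq0 Hsq Hs1).
  change (INR S) with Sr in HB. change (INR n * q) with mu0 in HB. change (Sr - mu0) with t in HB.

  set (f := ff p k (dd alpha n) s).
  assert (Hqk : q ^ k <= s ^ k) by (apply pow_incr; lra).
  assert (Hqk0 : 0 <= q ^ k) by (apply pow_le; lra).
  assert (Hqk1 : q ^ k <= q).
  { destruct k as [|k']; [lia|]. simpl. 
    assert (q ^ k' <= 1) by (rewrite <- (pow1 k'); apply pow_incr; lra). nra. }
  assert (Hf1 : f - 1 = p / (1 - p) * ((s ^ k - q ^ k) / (1 - q ^ k))).
  { unfold f, ff. rewrite Hq. ring. }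
  assert (Hpp : 0 < p / (1 - p)) by (apply Rdiv_lt_0_compat; lra).
  assert (Hf1pos : 0 <= f - 1).
  { rewrite Hf1. apply Rmult_le_pos; [lra|]. apply Rmult_le_pos; [lra|].
    apply Rlt_le, Rinv_0_lt_compat; lra. }
  assert (Hfrac : (s ^ k - q ^ k) / (1 - q ^ k) <= 2 * (s ^ k - q ^ k)).
  { apply Rmult_le_reg_r with (1 - q^k); [lra|]. unfold Rdiv. rewrite Rmult_assoc, Rinv_l by lra. nra. }
  assert (Hm : mm alpha n = INR n * (alpha * L)) by (unfold mm; rewrite Hd, ln_exp; reflexivity).
  assert (HW : WW alpha r p k n S <= exp (r * (INR n * (alpha * L)) * (f - 1))).
  { unfold WW, Rpower. rewrite Hm. fold f. apply exp_le_mono.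
    apply Rmult_le_compat_l; [apply Rmult_le_pos; [lra|apply Rmult_le_pos; lra]|]. apply ln_le_xm1. lra. }
  assert (HPhi : Phi alpha r p k n S <=
     exp (Sr * ln (mu0 / Sr) + t + r * (INR n * (alpha * L)) * (f - 1))).
  { unfold Phi, BB. rewrite Hq, exp_plus. apply Rmult_le_compat; auto.
    - apply Rmult_le_pos; [apply Rmult_le_pos|]; [apply C_pos|apply pow_le; lra|apply pow_le; lra].
    - unfold WW, Rpower. left; apply exp_pos. }
  eapply Rle_trans; [exact HPhi|]. apply exp_le_mono.
  assert (Htdef : t = Sr - mu0) by reflexivity.
  assert (Hmu0pos : 0 < mu0) by (rewrite Hmu0; nra).
  assert (HnS : INR n * s = Sr) by (unfold s; field; lra).
  assert (Hrm : 0 <= r * (INR n * (alpha * L))) by (apply Rmult_le_pos; [lra|apply Rmult_le_pos; lra]).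
  assert (Hmu0e : mu0 = exp ((1 - alpha) * L)).
  { unfold mu0, q. rewrite HnL, <- exp_plus. f_equal. ring. }
  destruct (Rlt_le_dec Sr (mu0 * exp (alpha0 alpha k * L))) as [HA|HB2].
  -
    assert (Hsig : s < exp ((alpha0 alpha k - alpha) * L)).
    { unfold s. apply Rmult_lt_reg_r with (INR n); [lra|]. unfold Rdiv. rewrite Rmult_assoc, Rinv_l by lra.
      rewrite Rmult_1_r. replace ((alpha0 alpha k - alpha) * L) with (- (alpha * L) + alpha0 alpha k * L) by ring.
      rewrite exp_plus. fold q. replace (q * exp (alpha0 alpha k * L) * INR n) with (mu0 * exp (alpha0 alpha k * L)) by (unfold mu0; ring).
      exact HA. }
    assert (Hsk1 : s ^ (k - 1) <= / h).
    { apply Rle_trans with (exp ((alpha0 alpha k - alpha) * L) ^ (k - 1)).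
      - apply pow_incr; lra.
      - rewrite pow_exp. unfold h. rewrite <- exp_Ropp. right. f_equal.
        rewrite minus_INR by lia. unfold alpha0. simpl INR. field. lra. }
    assert (Hdiff := pow_diff q s k ltac:(lra)).
    assert (Hsk0 : 0 <= s ^ (k - 1)) by (apply pow_le; lra).
    assert (Hf1A : r * (INR n * (alpha * L)) * (f - 1) <= (K * L / h) * t).
    { rewrite Hf1.
      apply Rle_trans with (r * (INR n * (alpha * L)) * (p / (1 - p) * (2 * (INR k * / h * (s - q))))).
      - apply Rmult_le_compat_l; [lra|]. apply Rmult_le_compat_l; [lra|].
        apply Rle_trans with (2 * (s ^ k - q ^ k)); [lra|]. apply Rmult_le_compat_l; [lra|].
        apply Rle_trans with (1 := Hdiff). apply Rmult_le_compat_r; [lra|].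
        apply Rmult_le_compat_l; [lra|]. exact Hsk1.
      - right. rewrite Htdef, <- HnS. unfold mu0, K. field. lra. }
    assert (HlnB : Sr * ln (mu0 / Sr) + t <= - (t ^ 2 / (2 * mu0 + t))).
    { assert (Hx : 0 <= t / mu0) by (apply Rdiv_le_0_compat; lra).
      assert (Hl := ln_lb (t / mu0) Hx).
      replace (mu0 / Sr) with (/ (1 + t / mu0)) by (rewrite Htdef; field; lra).
      rewrite ln_Rinv by lra.
      replace (2 * (t / mu0) / (2 + t / mu0)) with (2 * t / (2 * mu0 + t)) in Hl by (field; lra).
      assert (Sr * (2 * t / (2 * mu0 + t)) <= Sr * ln (1 + t / mu0)) by (apply Rmult_le_compat_l; lra).
      assert (Sr * (2 * t / (2 * mu0 + t)) = t + t ^ 2 / (2 * mu0 + t)) by (rewrite Htdef; field; lra).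
      lra. }
    assert (HA1 : 2 * (K * L / h) <= t0 / (3 * mu0)).
    { assert (E : t0 / (3 * mu0) - 2 * (K * L / h) = (lam * Eg - 6 * K * alpha * L ^ 2) / (3 * alpha * L * h)).
      { unfold t0. rewrite Hmu0. field. split; lra. }
      assert (0 <= (lam * Eg - 6 * K * alpha * L ^ 2) / (3 * alpha * L * h)).
      { apply Rdiv_le_0_compat. unfold Eg; lra. nra. }
      lra. }
    assert (HA2 : 2 * L <= t0 ^ 2 / (6 * mu0)).
    { assert (E : t0 ^ 2 / (6 * mu0) - 2 * L = ((lam * Eg) ^ 2 - 12 * alpha ^ 2 * L ^ 3) / (6 * alpha ^ 2 * L ^ 2)).
      { unfold t0. rewrite Hmu0. field. split; lra. }
      assert (0 <= ((lam * Eg) ^ 2 - 12 * alpha ^ 2 * L ^ 3) / (6 * alpha ^ 2 * L ^ 2)).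
      { apply Rdiv_le_0_compat. unfold Eg; lra. nra. }
      lra. }
    assert (Hfin := arithA t t0 mu0 (K * L / h) L Ht0 Ht Ht0mu HA1 HA2).
    lra.
  -
    assert (HlnB : ln (mu0 / Sr) <= - (alpha0 alpha k * L)).
    { rewrite <- (ln_exp (- (alpha0 alpha k * L))). apply ln_le_mono.
      apply Rdiv_lt_0_compat; lra.
      apply Rmult_le_reg_r with Sr; [lra|]. unfold Rdiv. rewrite Rmult_assoc, Rinv_l by lra.
      rewrite exp_Ropp. apply Rmult_le_reg_l with (exp (alpha0 alpha k * L)); [apply exp_pos|].
      replace (exp (alpha0 alpha k * L) * (/ exp (alpha0 alpha k * L) * Sr)) with Sr
        by (field; apply Rgt_not_eq, exp_pos). nra. }
    assert (Hsk : s ^ k <= s * eta2 ^ (k - 1)).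
    { apply pow_split_le; [lia|lra|lra]. }
    assert (Hmu2 : 2 * p * r / (1 - p) <= mu).
    { assert (2 * p * r / (1 - p) <= INR k * p * r / (1 - p)).
      { unfold Rdiv. apply Rmult_le_compat_r. apply Rlt_le, Rinv_0_lt_compat; lra.
        rewrite !Rmult_assoc. apply Rmult_le_compat_r; nra. }
      lra. }
    assert (He2k : 0 <= eta2 ^ (k - 1)) by (apply pow_le; lra).
    assert (Hf1B : r * (INR n * (alpha * L)) * (f - 1) <= mu * alpha * L * eta2 ^ (k - 1) * Sr).
    { rewrite Hf1.
      apply Rle_trans with (r * (INR n * (alpha * L)) * (p / (1 - p) * (2 * (s * eta2 ^ (k - 1))))).
      - apply Rmult_le_compat_l; [lra|]. apply Rmult_le_compat_l; [lra|].
        apply Rle_trans with (2 * (s ^ k - q ^ k)); [lra|]. lra.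
      - rewrite <- HnS.
        replace (r * (INR n * (alpha * L)) * (p / (1 - p) * (2 * (s * eta2 ^ (k - 1)))))
          with ((2 * p * r / (1 - p)) * (alpha * L * eta2 ^ (k - 1) * (INR n * s))) by (field; lra).
        replace (mu * alpha * L * eta2 ^ (k - 1) * (INR n * s)) with (mu * (alpha * L * eta2 ^ (k - 1) * (INR n * s))) by ring.
        apply Rmult_le_compat_r; [|lra]. apply Rmult_le_pos; [|nra]. apply Rmult_le_pos; nra. }
    assert (H1 : Sr * ln (mu0 / Sr) <= Sr * (- (alpha0 alpha k * L))) by (apply Rmult_le_compat_l; lra).
    assert (Hc0S : 4 <= c0 * Sr).
    { rewrite <- Hmu0e in HL4. apply Rle_trans with (1 := HL4). apply Rmult_le_compat_l; lra. }
    assert (Hc0def : c0 = alpha0 alpha k - alpha * mu * eta2 ^ (k - 1)) by reflexivity.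
    assert (Sr * (- (alpha0 alpha k * L)) + t + mu * alpha * L * eta2 ^ (k - 1) * Sr = Sr - c0 * L * Sr - mu0)
      by (rewrite Htdef, Hc0def; ring).
    nra.
Qed.

Lemma ev_exp (g C : R) : 0 < g -> exists M, 1 <= M /\ forall L, M <= L -> C * L ^ 3 <= exp (g * L).
Proof.
  intros Hg. exists (1 + Rabs C * (4 / g) ^ 4). split.
  { assert (0 <= Rabs C * (4 / g) ^ 4) by (apply Rmult_le_pos; [apply Rabs_pos| apply pow_le; apply Rlt_le, Rdiv_lt_0_compat; lra]). lra. }
  intros L HL.
  assert (H4 : 0 < (4 / g) ^ 4) by (apply pow_lt, Rdiv_lt_0_compat; lra).
  assert (HC : 0 <= Rabs C * (4 / g) ^ 4) by (apply Rmult_le_pos; [apply Rabs_pos|lra]).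
  assert (HL0 : 1 <= L) by lra.
  assert (Hexp : (g * L / 4) ^ 4 <= exp (g * L)).
  { replace (exp (g * L)) with (exp (g * L / 4) ^ 4) by (rewrite pow_exp; f_equal; simpl; field).
    apply pow_incr. split. apply Rmult_le_pos; [apply Rmult_le_pos; lra|lra].
    pose proof (exp_ineq1_le (g * L / 4)). lra. }
  eapply Rle_trans; [|exact Hexp].
  replace ((g * L / 4) ^ 4) with (L ^ 3 * (L / (4 / g) ^ 4)) by (field; lra).
  rewrite Rmult_comm. apply Rmult_le_compat_l; [apply pow_le; lra|].
  apply Rle_trans with (Rabs C); [apply RRle_abs|].
  apply Rmult_le_reg_r with ((4 / g) ^ 4); [lra|].
  replace (L / (4 / g) ^ 4 * (4 / g) ^ 4) with L by (field; lra). lra.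
Qed.

Theorem lemma4p7 (k : nat) (alpha r p lam eta2 eta3 mu : R) :
  (2 <= k)%nat -> 0 < alpha -> 0 < r -> 0 < p -> p < 1 ->
  (2 * INR k - 1) * alpha > 1 ->
  INR k * alpha <= 1 ->
  INR k >= tau p * ln (tau p) / (tau p - 1) ->
  r < r_cr p ->
  0 < lam ->
  0 < eta2 -> eta2 < eta3 -> eta3 < 1 ->
  alpha0 alpha k / alpha - mu * eta2 ^ (k - 1) > 0 ->
  mu > INR k * p * r / (1 - p) ->
  r * ln (1 - p) + eta3 > 0 ->
  Un_cv (fun n => sum_Phi alpha r p lam eta2 k n) 0.
Proof.
  intros Hk Ha Hr Hp Hp1 H2k Hka _ _ Hlam He2 He23 He3 Hal Hmu _.
  assert (Hk2 : 2 <= INR k) by (replace 2 with (INR 2) by (simpl; ring); apply le_INR; auto).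
  assert (Ha1 : alpha < 1) by nra.
  set (c0 := alpha0 alpha k - alpha * mu * eta2 ^ (k - 1)).
  assert (Hc0 : 0 < c0).
  { unfold c0. assert (E : alpha0 alpha k - alpha * mu * eta2 ^ (k - 1) =
      alpha * (alpha0 alpha k / alpha - mu * eta2 ^ (k - 1))) by (field; lra).
    rewrite E. apply Rmult_lt_0_compat; lra. }
  set (K := 2 * r * alpha * p * INR k / (1 - p)).
  assert (HK : 0 < K).
  { unfold K. apply Rdiv_lt_0_compat; [|lra].
    repeat apply Rmult_lt_0_compat; lra. }
  set (g := (INR k - 1) * alpha - (1 - alpha) / 2).
  assert (Hg : 0 < g) by (unfold g; lra).
  destruct (ev_exp g ((6 * K * alpha + 4 * alpha) / lam) Hg) as [M0 [HM01 HM0]].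
  set (M := Rmax M0 (Rmax (1 / alpha) (Rmax (lam / alpha) (Rmax (2 / c0) (4 / (c0 * (1 - alpha))))))).
  assert (HMs : M0 <= M /\ 1 / alpha <= M /\ lam / alpha <= M /\ 2 / c0 <= M /\ 4 / (c0 * (1 - alpha)) <= M).
  { unfold M. pose proof Rmax_l. pose proof Rmax_r. repeat split.
    - apply Rmax_l.
    - eapply Rle_trans; [|apply Rmax_r]; apply Rmax_l.
    - eapply Rle_trans; [|apply Rmax_r]; eapply Rle_trans; [|apply Rmax_r]; apply Rmax_l.
    - eapply Rle_trans; [|apply Rmax_r]; eapply Rle_trans; [|apply Rmax_r];
      eapply Rle_trans; [|apply Rmax_r]; apply Rmax_l.
    - eapply Rle_trans; [|apply Rmax_r]; eapply Rle_trans; [|apply Rmax_r];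
      eapply Rle_trans; [|apply Rmax_r]; apply Rmax_r. }
  destruct HMs as [HM1 [HM2 [HM3 [HM4 HM5]]]].
  assert (Hcond : forall L, M <= L ->
    1 <= alpha * L /\ lam <= alpha * L /\ 2 <= c0 * L /\ 4 <= c0 * exp ((1 - alpha) * L) /\
    6 * K * alpha * L ^ 2 <= lam * exp (g * L) /\ 12 * alpha ^ 2 * L ^ 3 <= (lam * exp (g * L)) ^ 2).
  { intros L HL.
    assert (HL1 : 1 <= L) by lra.
    assert (Hdiv : forall a b, 0 < b -> a / b <= L -> a <= b * L).
    { intros a b hb hab. apply Rmult_le_compat_l with (r := b) in hab; [|lra].
      replace (b * (a / b)) with a in hab by (field; lra). exact hab. }
    assert (HE := HM0 L ltac:(lra)).
    assert (HE2 : (6 * K * alpha + 4 * alpha) * L ^ 3 <= lam * exp (g * L)).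
    { apply Rmult_le_compat_l with (r := lam) in HE; [|lra].
      replace (lam * ((6 * K * alpha + 4 * alpha) / lam * L ^ 3)) with ((6 * K * alpha + 4 * alpha) * L ^ 3) in HE
        by (field; lra). exact HE. }
    assert (HL23 : L ^ 2 <= L ^ 3) by (simpl; nra).
    assert (HL2p : 1 <= L ^ 2) by (simpl; nra).
    repeat split.
    - apply Hdiv; [lra|]. lra.
    - apply Hdiv; [lra|]. lra.
    - apply Hdiv; [lra|]. lra.
    - pose proof (exp_ineq1_le ((1 - alpha) * L)).
      assert (4 <= c0 * ((1 - alpha) * L)).
      { replace (c0 * ((1 - alpha) * L)) with ((c0 * (1 - alpha)) * L) by ring.
        apply Hdiv; [nra|]. lra. }
      nra.
    - assert (0 <= K * alpha) by nra. nra.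
    - assert (h4 : 4 * alpha * L ^ 3 <= lam * exp (g * L)).
      { assert (0 <= 6 * K * alpha * L ^ 3) by (assert (0 <= L^3) by (apply pow_le; lra); apply Rmult_le_pos; [nra|apply pow_le; lra]).
        assert (E : (6 * K * alpha + 4 * alpha) * L ^ 3 = 6 * K * alpha * L ^ 3 + 4 * alpha * L ^ 3) by ring.
        lra. }
      assert (0 <= 4 * alpha * L ^ 3) by (apply Rmult_le_pos; [nra|apply pow_le; lra]).
      assert ((4 * alpha * L ^ 3) ^ 2 <= (lam * exp (g * L)) ^ 2) by (apply pow_incr; lra).
      assert (12 * alpha ^ 2 * L ^ 3 <= (4 * alpha * L ^ 3) ^ 2).
      { replace ((4 * alpha * L ^ 3) ^ 2) with (16 * alpha ^ 2 * L ^ 3 * L ^ 3) by ring.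
        assert (0 <= alpha ^ 2 * L ^ 3) by (assert (0 <= L^3) by (apply pow_le; lra); nra). nra. }
      lra. }
  destruct (archimed_cor1 (exp (- M)) (exp_pos _)) as [N1 [HN1 HN1p]].
  assert (HN1M : forall n, (N1 <= n)%nat -> M <= ln (INR n) /\ 0 < INR n).
  { intros n hn. assert (h0 : 0 < INR N1) by (apply lt_0_INR; lia).
    assert (h1 : INR N1 <= INR n) by (apply le_INR; lia).
    assert (exp M < INR N1).
    { rewrite exp_Ropp in HN1.
      assert (h2 := Rinv_lt_contravar (/ INR N1) (/ exp M)).
      rewrite !Rinv_inv in h2. apply h2; [|exact HN1].
      apply Rmult_lt_0_compat; apply Rinv_0_lt_compat; [exact h0|apply exp_pos]. }
    split; [|lra]. rewrite <- (ln_exp M). apply ln_le_mono; [apply exp_pos|lra]. }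
  intros eps Heps.
  destruct (archimed_cor1 (eps / 2) ltac:(lra)) as [N2 [HN2 HN2p]].
  exists (max N1 N2). intros n Hn.
  destruct (HN1M n ltac:(lia)) as [HLn Hn0].
  assert (HN2n : / INR n <= / INR N2).
  { apply Rinv_le_contravar; [apply lt_0_INR; lia| apply le_INR; lia]. }
  set (L := ln (INR n)) in *.
  assert (HnL : INR n = exp L) by (unfold L; rewrite exp_ln; auto).
  destruct (Hcond L HLn) as [C1 [C2 [C3 [C4 [C5 C6]]]]].
  assert (Hb : exp (- (2 * L)) = / INR n * / INR n).
  { rewrite HnL, <- Rinv_mult, <- exp_plus, exp_Ropp. f_equal. f_equal. ring. }
  assert (Hsum : 0 <= sum_Phi alpha r p lam eta2 k n <= INR (Datatypes.S n) * exp (- (2 * L))).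
  { unfold sum_Phi. apply sum_bound. intros j hj.
    assert (0 <= exp (- (2 * L))) by (left; apply exp_pos).
    destruct (Rle_dec (INR n * eta1 alpha lam k n) (INR j)) as [h1|h1]; [|lra].
    destruct (Rle_dec (INR j) (INR n * eta2)) as [h2|h2]; [|lra].
    split.
    - unfold Phi, BB, WW, Rpower. apply Rmult_le_pos; [|left; apply exp_pos].
      assert (Hd : 1 <= dd alpha n).
      { unfold dd, Rpower. fold L. pose proof (exp_ineq1_le (alpha * L)). nra. }
      assert (0 < / dd alpha n <= 1).
      { split. apply Rinv_0_lt_compat; lra. rewrite <- Rinv_1. apply Rinv_le_contravar; lra. }
      apply Rmult_le_pos; [apply Rmult_le_pos|]; [apply C_pos|apply pow_le; lra|apply pow_le; lra].
    - apply (term_bound k alpha r p lam eta2 mu n j); auto; try lra; fold c0; lra. }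
  unfold R_dist. rewrite Rminus_0_r, Rabs_pos_eq by lra.
  eapply Rle_lt_trans; [apply Hsum|]. rewrite Hb, S_INR.
  assert (1 <= INR n) by (replace 1 with (INR 1) by reflexivity; apply le_INR; lia).
  assert ((INR n + 1) * (/ INR n * / INR n) <= 2 * / INR n).
  { replace ((INR n + 1) * (/ INR n * / INR n)) with ((1 + / INR n) * / INR n) by (field; lra).
    apply Rmult_le_compat_r. left; apply Rinv_0_lt_compat; lra.
    assert (/ INR n <= 1) by (rewrite <- Rinv_1; apply Rinv_le_contravar; lra). lra. }
  lra.
Qed.
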